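(* There exist a constant $c>0$ and infinitely many values of $n$ such that for each such $n$ there is a tabletop rearrangement instance with $n$ uniform cylinders (congruent disc footprints) whose unlabeled $\mathrm{MRB}$ is at least $c\sqrt{n}$, and whose labeled $\mathrm{MRB}$ (for any assignment of labels to the start and goal poses) is at least $c\sqrt{n}$. That is, for both the labeled and unlabeled problems with $n$ uniform cylinders, $\mathrm{MRB}$ is lower bounded by $\Omega(\sqrt{n})$ in the worst case.
   Context: A tabletop rearrangement instance consists of $n$ objects in a bounded planar workspace, with a feasible start arrangement and a feasible goal arrangement (poses in $SE(2)$; feasible means no two placed footprints have intersecting interiors). In the labeled setting each object $o_i$ must end at its own goal pose $x_i^g$; in the unlabeled setting the (congruent) objects are interchangeable and must end occupying all goal poses. A plan with external buffers: each object is picked from its start pose exactly once and either placed at a goal pose (its own goal in the labeled case, any unoccupied goal in the unlabeled case) or into an external buffer outside the workspace (unlimited capacity), in the latter case later moved from the buffer to such a goal pose; an object may be placed at a goal pose only if it overlaps no object currently in the workspace; at the end the goal requirement holds. Running buffers at a moment = number of objects stored in buffers; $\mathrm{MRB}$ = minimum over plans of the maximum number of running buffers. *)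

(* Defs.v *)
From Stdlib Require Import Reals Lra List.
Import ListNotations.
Open Scope R_scope.

(** Points of the plane. A uniform cylinder's footprint is a disc of radius r,
    so its pose in SE(2) is determined (as far as the footprint is concerned)
    by the centre of the disc. *)
Definition point := (R * R)%type.

Definition dist2 (p q : point) : R :=
  (fst p - fst q) ^ 2 + (snd p - snd q) ^ 2.

Definition in_open_disc (r : R) (c z : point) : Prop := dist2 z c < r ^ 2.

Definition overlap (r : R) (p q : point) : Prop :=
  exists z, in_open_disc r p z /\ in_open_disc r q z.

Definition in_workspace (L r : R) (c : point) : Prop :=
  forall z, in_open_disc r c z ->
    0 <= fst z <= L /\ 0 <= snd z <= L.

Definition valid_instance (n : nat) (r L : R) (s g : nat -> point) : Prop :=
  0 < r /\
  (forall i, (i < n)%nat -> in_workspace L r (s i) /\ in_workspace L r (g i)) /\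
  (forall i j, (i < n)%nat -> (j < n)%nat -> i <> j -> ~ overlap r (s i) (s j)) /\
  (forall i j, (i < n)%nat -> (j < n)%nat -> i <> j -> ~ overlap r (g i) (g j)).

Definition is_perm (n : nat) (sigma : nat -> nat) : Prop :=
  (forall i, (i < n)%nat -> (sigma i < n)%nat) /\
  (forall i j, (i < n)%nat -> (j < n)%nat -> sigma i = sigma j -> i = j).

Inductive lloc := LAtStart | LInBuf | LAtGoal.
Definition lstate := nat -> lloc.

Inductive laction :=
| LDirect (i : nat)
| LToBuf (i : nat)
| LFromBuf (i : nat).

Definition lupd (st : lstate) (i : nat) (v : lloc) : lstate :=
  fun k => if Nat.eq_dec k i then v else st k.

Definition lpos (s g : nat -> point) (st : lstate) (k : nat) : option point :=
  match st k with
  | LAtStart => Some (s k)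
  | LInBuf => None
  | LAtGoal => Some (g k)
  end.

Definition lfree (n : nat) (r : R) (s g : nat -> point) (st : lstate)
    (i : nat) (p : point) : Prop :=
  forall k, (k < n)%nat -> k <> i ->
    match lpos s g st k with Some q => ~ overlap r p q | None => True end.

Definition lapply (st : lstate) (a : laction) : lstate :=
  match a with
  | LDirect i => lupd st i LAtGoal
  | LToBuf i => lupd st i LInBuf
  | LFromBuf i => lupd st i LAtGoal
  end.

Definition lstep_ok (n : nat) (r : R) (s g : nat -> point) (st : lstate)
    (a : laction) : Prop :=
  match a with
  | LDirect i => (i < n)%nat /\ st i = LAtStart /\ lfree n r s g st i (g i)
  | LToBuf i => (i < n)%nat /\ st i = LAtStart
  | LFromBuf i => (i < n)%nat /\ st i = LInBuf /\ lfree n r s g st i (g i)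
  end.

Definition lfinal (n : nat) (st : lstate) : Prop :=
  forall i, (i < n)%nat -> st i = LAtGoal.

Fixpoint lplan_ok (n : nat) (r : R) (s g : nat -> point) (st : lstate)
    (plan : list laction) : Prop :=
  match plan with
  | [] => lfinal n st
  | a :: p => lstep_ok n r s g st a /\ lplan_ok n r s g (lapply st a) p
  end.

Fixpoint lstates (st : lstate) (plan : list laction) : list lstate :=
  st :: match plan with
        | [] => []
        | a :: p => lstates (lapply st a) p
        end.

Definition lbuf_count (n : nat) (st : lstate) : nat :=
  length (filter (fun k => match st k with LInBuf => true | _ => false end)
                 (seq 0 n)).

Definition linit : lstate := fun _ => LAtStart.

Definition lmax_buffers (n : nat) (plan : list laction) : nat :=
  fold_right Nat.max 0%nat (map (lbuf_count n) (lstates linit plan)).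

Inductive uloc := UAtStart | UInBuf | UAtGoal (j : nat).
Definition ustate := nat -> uloc.

Inductive uaction :=
| UDirect (i j : nat)
| UToBuf (i : nat)
| UFromBuf (i j : nat).

Definition uupd (st : ustate) (i : nat) (v : uloc) : ustate :=
  fun k => if Nat.eq_dec k i then v else st k.

Definition upos (s g : nat -> point) (st : ustate) (k : nat) : option point :=
  match st k with
  | UAtStart => Some (s k)
  | UInBuf => None
  | UAtGoal j => Some (g j)
  end.

Definition ufree (n : nat) (r : R) (s g : nat -> point) (st : ustate)
    (i j : nat) : Prop :=
  (j < n)%nat /\
  (forall k, (k < n)%nat -> st k <> UAtGoal j) /\
  (forall k, (k < n)%nat -> k <> i ->
    match upos s g st k with Some q => ~ overlap r (g j) q | None => True end).

Definition uapply (st : ustate) (a : uaction) : ustate :=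
  match a with
  | UDirect i j => uupd st i (UAtGoal j)
  | UToBuf i => uupd st i UInBuf
  | UFromBuf i j => uupd st i (UAtGoal j)
  end.

Definition ustep_ok (n : nat) (r : R) (s g : nat -> point) (st : ustate)
    (a : uaction) : Prop :=
  match a with
  | UDirect i j => (i < n)%nat /\ st i = UAtStart /\ ufree n r s g st i j
  | UToBuf i => (i < n)%nat /\ st i = UAtStart
  | UFromBuf i j => (i < n)%nat /\ st i = UInBuf /\ ufree n r s g st i j
  end.

Definition ufinal (n : nat) (st : ustate) : Prop :=
  forall j, (j < n)%nat -> exists i, (i < n)%nat /\ st i = UAtGoal j.

Fixpoint uplan_ok (n : nat) (r : R) (s g : nat -> point) (st : ustate)
    (plan : list uaction) : Prop :=
  match plan with
  | [] => ufinal n st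
  | a :: p => ustep_ok n r s g st a /\ uplan_ok n r s g (uapply st a) p
  end.

Fixpoint ustates (st : ustate) (plan : list uaction) : list ustate :=
  st :: match plan with
        | [] => []
        | a :: p => ustates (uapply st a) p
        end.

Definition ubuf_count (n : nat) (st : ustate) : nat :=
  length (filter (fun k => match st k with UInBuf => true | _ => false end)
                 (seq 0 n)).

Definition uinit : ustate := fun _ => UAtStart.

Definition umax_buffers (n : nat) (plan : list uaction) : nat :=
  fold_right Nat.max 0%nat (map (ubuf_count n) (ustates uinit plan)).

(* Main.v *)
Require Import Defs.
From Stdlib Require Import Reals Lra Lia List Arith Classical.
Import ListNotations.
Local Open Scope nat_scope.

Fixpoint sumf (f : nat -> nat) (N : nat) : nat :=
  match N with 0 => 0 | S N' => sumf f N' + f N' end.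
Definition cnt (p : nat -> bool) N := sumf (fun i => if p i then 1 else 0) N.

Lemma cnt_filter p N : length (filter p (seq 0 N)) = cnt p N.
Proof.
  induction N; auto.
  rewrite seq_S, filter_app, length_app, IHN. simpl. unfold cnt. simpl sumf.
  destruct (p N); simpl; lia.
Qed.

Lemma sumf_le f g N : (forall i, i < N -> f i <= g i) -> sumf f N <= sumf g N.
Proof. induction N; simpl; intros H; auto. specialize (H N) as H'. assert (sumf f N <= sumf g N) by (apply IHN; intros; apply H; lia). lia. Qed.

Lemma sumf_ext f g N : (forall i, i < N -> f i = g i) -> sumf f N = sumf g N.
Proof. intros H. apply Nat.le_antisymm; apply sumf_le; intros i Hi; rewrite H; auto. Qed.

Lemma sumf_add f g N : sumf (fun i => f i + g i) N = sumf f N + sumf g N.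
Proof. induction N; simpl; lia. Qed.

Lemma sumf_scale c f N : sumf (fun i => c * f i) N = c * sumf f N.
Proof. induction N; simpl; lia. Qed.

Lemma sumf_const c N : sumf (fun _ => c) N = N * c.
Proof. induction N; simpl; lia. Qed.

Lemma sumf_shift f A B : sumf f (A + B) = sumf f A + sumf (fun i => f (A + i)) B.
Proof. induction B; simpl. rewrite Nat.add_0_r; lia. rewrite Nat.add_succ_r. simpl. lia. Qed.

Lemma sumf_split f R W : sumf f (R * W) = sumf (fun r => sumf (fun c => f (r * W + c)) W) R.
Proof. induction R; simpl; auto. rewrite Nat.add_comm, sumf_shift, IHR. lia. Qed.

Lemma cnt_le p q N : (forall i, i < N -> p i = true -> q i = true) -> cnt p N <= cnt q N.
Proof. intros H. apply sumf_le. intros i Hi. specialize (H i Hi). destruct (p i), (q i); auto; discriminate H; reflexivity. Qed.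

Lemma cnt_bound p N : cnt p N <= N.
Proof. unfold cnt. induction N; simpl; auto. destruct (p N); lia. Qed.

Lemma cnt_all p N : (forall i, i < N -> p i = true) -> cnt p N = N.
Proof. unfold cnt. induction N; simpl; intros; auto. rewrite H by lia. rewrite IHN; intros; try apply H; lia. Qed.

Lemma cnt_none p N : (forall i, i < N -> p i = false) -> cnt p N = 0.
Proof. unfold cnt. induction N; simpl; intros; auto. rewrite H by lia. rewrite IHN; intros; try apply H; lia. Qed.

Lemma cnt_or p a b N : (forall i, i < N -> p i = true -> a i = true \/ b i = true) ->
  cnt p N <= cnt a N + cnt b N.
Proof.
  intros H. unfold cnt. rewrite <- sumf_add. apply sumf_le. intros i Hi.
  specialize (H i Hi). destruct (p i), (a i), (b i); try lia; destruct H; auto; discriminate.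
Qed.

Lemma cnt_eqb_le1 x N : cnt (Nat.eqb x) N <= 1.
Proof.
  unfold cnt. induction N; simpl; auto.
  destruct (Nat.eqb_spec x N); [|lia].
  subst. assert (sumf (fun i => if Nat.eqb N i then 1 else 0) N = 0); [|lia].
  apply (cnt_none (Nat.eqb N)). intros i Hi. apply Nat.eqb_neq. lia.
Qed.

Lemma cnt_step p p' x N : (forall j, j < N -> p' j = true -> p j = true \/ j = x) ->
  cnt p' N <= cnt p N + 1.
Proof.
  intros H. pose proof (cnt_eqb_le1 x N).
  assert (cnt p' N <= cnt p N + cnt (Nat.eqb x) N); [|lia].
  apply cnt_or. intros j Hj Hp. destruct (H j Hj Hp); auto. right. apply Nat.eqb_eq; auto.
Qed.

Lemma cnt_inj (P Q : nat -> bool) (h : nat -> nat) n N :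
  (forall i, i < n -> P i = true -> h i < N /\ Q (h i) = true) ->
  (forall i i', i < n -> i' < n -> P i = true -> P i' = true -> h i = h i' -> i = i') ->
  cnt P n <= cnt Q N.
Proof.
  intros H1 H2. rewrite <- !cnt_filter.
  rewrite <- (length_map h).
  apply NoDup_incl_length.
  - apply NoDup_map_NoDup_ForallPairs.
    + intros x y Hx Hy. apply filter_In in Hx, Hy. destruct Hx as [Hx Px], Hy as [Hy Py].
      apply in_seq in Hx, Hy. apply H2; auto; lia.
    + apply NoDup_filter, seq_NoDup.
  - intros y Hy. apply in_map_iff in Hy. destruct Hy as [x [<- Hx]].
    apply filter_In in Hx. destruct Hx as [Hx Px]. apply in_seq in Hx. destruct (H1 x) as [A B]; auto; try lia.
    apply filter_In. split; auto. apply in_seq. lia.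
Qed.

Lemma row_lemma (f g : nat -> bool) K :
  (forall a, a < K -> f a = true -> g a = true /\ g (S a) = true) ->
  cnt f K + Nat.min 1 (cnt f K) <= cnt g (S K).
Proof.
  unfold cnt. induction K; intros H; cbn [sumf]; [lia|].
  assert (IH := IHK (fun a Ha => H a (Nat.lt_lt_succ_r _ _ Ha))).
  cbn [sumf] in IH. destruct (f K) eqn:E.
  - destruct (H K (Nat.lt_succ_diag_r _) E) as [G1 G2]. rewrite G2, G1. rewrite G1 in IH.
    destruct (sumf (fun i : nat => if f i then 1 else 0) K) eqn:E2; lia.
  - destruct (g (S K)); lia.
Qed.

Lemma drop_lemma (u v : nat -> nat) K :
  (forall t, t < K -> u t <= v t /\ u (S t) <= v t) ->
  forall M, M <= K -> sumf u (S K) <= sumf v K + u M.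
Proof.
  induction K; intros H M HM; simpl.
  - assert (M = 0) by lia. subst. lia.
  - destruct (Nat.eq_dec M (S K)).
    + subst. assert (sumf u K <= sumf v K) by (apply sumf_le; intros; apply H; lia).
      specialize (H K (Nat.lt_succ_diag_r _)). lia.
    + assert (IH := IHK (fun t Ht => H t (Nat.lt_lt_succ_r _ _ Ht)) M ltac:(lia)). simpl in IH.
      specialize (H K (Nat.lt_succ_diag_r _)). lia.
Qed.

Lemma core q (vac inbuf atgoal filled : nat -> bool) :
  1 <= q ->
  (forall i, i < (2*q) * S (2*q) -> vac i = true -> inbuf i = true \/ atgoal i = true) ->
  cnt atgoal ((2*q) * S (2*q)) <= cnt filled ((2*q) * S (2*q)) ->
  cnt filled ((2*q) * S (2*q)) = q * S (2*q) ->
  (forall b a t c, b < S (2*q) -> a < 2*q -> t < 2*q -> (t = b \/ S t = b) ->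
      (c = a \/ c = S a) -> filled (b * (2*q) + a) = true -> vac (t * S (2*q) + c) = true) ->
  q <= cnt inbuf ((2*q) * S (2*q)).
Proof.
  intros Hq Hv Ha Hf Hgeo.
  set (k := 2*q) in *. set (w := S k) in *.
  set (r := fun b => cnt (fun a => filled (b * k + a)) k).
  set (v := fun t => cnt (fun c => vac (t * w + c)) w).
  set (u := fun b => r b + Nat.min 1 (r b)).
  assert (HF : cnt filled (k * w) = sumf r w).
  { rewrite Nat.mul_comm. unfold cnt. rewrite sumf_split. reflexivity. }
  assert (HV : cnt vac (k * w) = sumf v k).
  { unfold cnt. rewrite sumf_split. reflexivity. }
  assert (Huv : forall t, t < k -> u t <= v t /\ u (S t) <= v t).
  { intros t Ht. split; apply row_lemma; intros a Ha' Hfa; cbv beta in Hfa.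
    - split; apply (Hgeo t a t); auto; lia.
    - split; apply (Hgeo (S t) a t); auto; lia. }
  assert (Hbuf : cnt vac (k*w) <= cnt inbuf (k*w) + cnt atgoal (k*w)) by (apply cnt_or; auto).
  assert (Hsu : sumf u w = sumf r w + sumf (fun b => Nat.min 1 (r b)) w) by (apply sumf_add).
  set (Nn := sumf (fun b => Nat.min 1 (r b)) w) in *.
  assert (Key : forall M, M < w -> Nn <= cnt inbuf (k*w) + u M).
  { intros M HM. pose proof (drop_lemma u v k Huv M ltac:(lia)). fold w in H. lia. }
  assert (Hrk : forall b, r b <= k) by (intros; apply cnt_bound).
  destruct (classic (exists b, b < w /\ r b = 0)) as [[b [Hb Hr0]]|Hno].
  - specialize (Key b Hb). unfold u in Key. rewrite Hr0 in Key.
    assert (sumf r w <= sumf (fun b => k * Nat.min 1 (r b)) w).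
    { apply sumf_le. intros i _. specialize (Hrk i). destruct (r i); simpl; lia. }
    rewrite sumf_scale in H. fold Nn in H.
    assert (q * w <= k * Nn) by lia. unfold w, k in H0. nia.
  - assert (HN : Nn = w).
    { unfold Nn. rewrite (sumf_ext _ (fun _ => 1)). rewrite sumf_const; lia.
      intros i Hi. assert (r i <> 0) by (intro; apply Hno; eauto). lia. }
    destruct (classic (exists M, M < w /\ r M <= q)) as [[M [HM HrM]]|Hno2].
    + specialize (Key M HM). unfold u in Key. unfold w, k in *. lia.
    + assert (sumf (fun _ => S q) w <= sumf r w).
      { apply sumf_le. intros i Hi. destruct (le_lt_dec (r i) q); auto.
        exfalso; apply Hno2; eauto. }
      rewrite sumf_const in H. unfold w, k in *. nia.
Qed.
Local Open Scope R_scope.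

Lemma overlap_close r p q : 0 < r -> dist2 p q < 4 * r ^ 2 -> overlap r p q.
Proof.
  intros Hr H. destruct p as [a b], q as [c d]. unfold dist2 in *; simpl in *.
  exists ((a + c) / 2, (b + d) / 2). unfold in_open_disc, dist2; simpl. split; nra.
Qed.

Lemma no_overlap_far r p q : 4 * r ^ 2 <= dist2 p q -> ~ overlap r p q.
Proof.
  intros H [z [H1 H2]]. destruct p as [a b], q as [c d], z as [x y].
  unfold in_open_disc, dist2 in *; simpl in *.
  assert ((a - c)^2 <= 2*(x-a)^2 + 2*(x-c)^2) by (pose proof (pow2_ge_0 (2*x-a-c)); nra).
  assert ((b - d)^2 <= 2*(y-b)^2 + 2*(y-d)^2) by (pose proof (pow2_ge_0 (2*y-b-d)); nra).
  lra.
Qed.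

Lemma nat_sep x y : x <> y -> 1 <= (INR x - INR y) ^ 2.
Proof.
  intros H. destruct (Nat.lt_gt_cases x y) as [[Hl|Hl] _]; auto.
  - assert (INR x + 1 <= INR y) by (rewrite <- S_INR; apply le_INR; lia). nra.
  - assert (INR y + 1 <= INR x) by (rewrite <- S_INR; apply le_INR; lia). nra.
Qed.

Lemma idx_mod t c W : (c < W)%nat -> ((t * W + c) mod W = c /\ (t * W + c) / W = t)%nat.
Proof.
  intros H. split.
  - rewrite Nat.add_comm, Nat.Div0.mod_add. apply Nat.mod_small; auto.
  - rewrite Nat.div_add_l by lia. rewrite Nat.div_small; lia.
Qed.

Definition kk (q : nat) : nat := (2 * q)%nat.
Definition ww (q : nat) : nat := S (2 * q).
Definition nn (q : nat) : nat := (2 * q * S (2 * q))%nat.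
Definition sp (q : nat) (i : nat) : point :=
  (INR (i mod ww q) + /2, INR (i / ww q) + 1).
Definition gp (q : nat) (j : nat) : point :=
  (INR (j mod kk q) + 1, INR (j / kk q) + /2).

Lemma geo_overlap q b a t c : (1 <= q)%nat -> (a < 2*q)%nat -> (c < S (2*q))%nat ->
  (t = b \/ S t = b)%nat -> (c = a \/ c = S a)%nat ->
  overlap (/2) (gp q (b * (2*q) + a)) (sp q (t * S (2*q) + c)).
Proof.
  intros Hq Ha Hc Ht Hca. unfold gp, sp, kk, ww.
  destruct (idx_mod b a (2*q) Ha) as [E1 E2]. destruct (idx_mod t c (S (2*q)) Hc) as [E3 E4].
  rewrite E1, E2, E3, E4.
  apply overlap_close; [lra|]. unfold dist2; simpl.
  destruct Ht as [->| <-]; destruct Hca as [->| ->]; rewrite ?S_INR; lra.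
Qed.

Lemma valid q : (1 <= q)%nat -> valid_instance (nn q) (/2) (INR (ww q)) (sp q) (gp q).
Proof.
  intros Hq. unfold nn, valid_instance. split; [lra|]. split; [|split].
  - intros i Hi. assert (Hw : (ww q <> 0)%nat) by (unfold ww; lia).
    assert (Hk : (kk q <> 0)%nat) by (unfold kk; lia).
    split; intros z Hz; unfold in_open_disc, dist2, sp, gp in Hz; destruct z as [x y]; cbn [fst snd] in *; replace ((/2)^2) with (/4) in Hz by field.
    + assert (H1 : (i mod ww q < ww q)%nat) by (apply Nat.mod_upper_bound; auto).
      assert (H2 : (i / ww q < kk q)%nat) by (apply Nat.Div0.div_lt_upper_bound; unfold kk, ww in *; lia).
      assert (H1' : INR (i mod ww q) + 1 <= INR (ww q)) by (rewrite <- S_INR; apply le_INR; lia).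
      assert (H2' : INR (i / ww q) + 1 <= INR (kk q)) by (rewrite <- S_INR; apply le_INR; lia).
      assert (H3 : INR (ww q) = INR (kk q) + 1) by (unfold ww, kk; rewrite S_INR; auto).
      pose proof (pos_INR (i mod ww q)). pose proof (pos_INR (i / ww q)).
      assert ((x - (INR (i mod ww q) + /2))^2 < /4) by (pose proof (pow2_ge_0 (y - (INR (i / ww q) + 1))); lra).
      assert ((y - (INR (i / ww q) + 1))^2 < /4) by (pose proof (pow2_ge_0 (x - (INR (i mod ww q) + /2))); lra).
      split; split; nra.
    + assert (H1 : (i mod kk q < kk q)%nat) by (apply Nat.mod_upper_bound; auto).
      assert (H2 : (i / kk q < ww q)%nat) by (apply Nat.Div0.div_lt_upper_bound; unfold kk, ww in *; lia).
      assert (H1' : INR (i mod kk q) + 1 <= INR (kk q)) by (rewrite <- S_INR; apply le_INR; lia).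
      assert (H2' : INR (i / kk q) + 1 <= INR (ww q)) by (rewrite <- S_INR; apply le_INR; lia).
      assert (H3 : INR (ww q) = INR (kk q) + 1) by (unfold ww, kk; rewrite S_INR; auto).
      pose proof (pos_INR (i mod kk q)). pose proof (pos_INR (i / kk q)).
      assert ((x - (INR (i mod kk q) + 1))^2 < /4) by (pose proof (pow2_ge_0 (y - (INR (i / kk q) + /2))); lra).
      assert ((y - (INR (i / kk q) + /2))^2 < /4) by (pose proof (pow2_ge_0 (x - (INR (i mod kk q) + 1))); lra).
      split; split; nra.
  - intros i j Hi Hj Hij. apply no_overlap_far. unfold dist2, sp; cbn [fst snd].
    assert (Hw : (ww q <> 0)%nat) by (unfold ww; lia).
    pose proof (Nat.div_mod_eq i (ww q)). pose proof (Nat.div_mod_eq j (ww q)).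
    destruct (Nat.eq_dec (i mod ww q) (j mod ww q)) as [E|E].
    + assert (i / ww q <> j / ww q)%nat by (intro E'; apply Hij; lia).
      pose proof (nat_sep _ _ H1). pose proof (pow2_ge_0 (INR (i mod ww q) + / 2 - (INR (j mod ww q) + / 2))).
      replace (INR (i / ww q) + 1 - (INR (j / ww q) + 1)) with (INR (i / ww q) - INR (j / ww q)) by ring. lra.
    + pose proof (nat_sep _ _ E). pose proof (pow2_ge_0 (INR (i / ww q) + 1 - (INR (j / ww q) + 1))).
      replace (INR (i mod ww q) + /2 - (INR (j mod ww q) + /2)) with (INR (i mod ww q) - INR (j mod ww q)) by ring. lra.
  - intros i j Hi Hj Hij. apply no_overlap_far. unfold dist2, gp; cbn [fst snd].
    assert (Hw : (kk q <> 0)%nat) by (unfold kk; lia).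
    pose proof (Nat.div_mod_eq i (kk q)). pose proof (Nat.div_mod_eq j (kk q)).
    destruct (Nat.eq_dec (i mod kk q) (j mod kk q)) as [E|E].
    + assert (i / kk q <> j / kk q)%nat by (intro E'; apply Hij; lia).
      pose proof (nat_sep _ _ H1). pose proof (pow2_ge_0 (INR (i mod kk q) + 1 - (INR (j mod kk q) + 1))).
      replace (INR (i / kk q) + /2 - (INR (j / kk q) + /2)) with (INR (i / kk q) - INR (j / kk q)) by ring. lra.
    + pose proof (nat_sep _ _ E). pose proof (pow2_ge_0 (INR (i / kk q) + /2 - (INR (j / kk q) + /2))).
      replace (INR (i mod kk q) + 1 - (INR (j mod kk q) + 1)) with (INR (i mod kk q) - INR (j mod kk q)) by ring. lra.
Qed.
Local Open Scope nat_scope.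

Lemma fold_max_ge {T} (f : T -> nat) l x : In x l -> f x <= fold_right Nat.max 0 (map f l).
Proof. induction l; simpl; [tauto|]. intros [->|H]; [lia|]. specialize (IHl H). lia. Qed.

Definition lat (st : lstate) i := match st i with LAtGoal => true | _ => false end.
Definition lvac (st : lstate) i := match st i with LAtStart => false | _ => true end.
Definition lbf (st : lstate) i := match st i with LInBuf => true | _ => false end.
Definition lfilled n (sigma : nat -> nat) st j :=
  existsb (fun i => andb (lat st i) (Nat.eqb (sigma i) j)) (seq 0 n).
Definition LInv n r s (gs : nat -> point) (st : lstate) :=
  forall i, i < n -> st i = LAtGoal -> forall x, x < n -> overlap r (gs i) (s x) -> st x <> LAtStart.
Definition laidx a := match a with LDirect i | LToBuf i | LFromBuf i => i end.

Lemma LInv_step n r s gs st a : LInv n r s gs st -> lstep_ok n r s gs st a -> LInv n r s gs (lapply st a).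
Proof.
  intros HI Hok. unfold LInv in *.
  destruct a as [i|i|i]; simpl in Hok |- *; unfold lupd;
    intros i' Hi' Hg x Hx Hov; destruct (Nat.eq_dec x i); try discriminate;
    destruct (Nat.eq_dec i' i); try discriminate.
  - subst i'. destruct Hok as [_ [_ Hf]]. specialize (Hf x Hx n0). unfold lpos in Hf.
    intro Hs. rewrite Hs in Hf. apply Hf; auto.
  - apply (HI i'); auto.
  - apply (HI i'); auto.
  - subst i'. destruct Hok as [_ [_ Hf]]. specialize (Hf x Hx n0). unfold lpos in Hf.
    intro Hs. rewrite Hs in Hf. apply Hf; auto.
  - apply (HI i'); auto.
Qed.

Lemma lfilled_step n sigma st a j : lfilled n sigma (lapply st a) j = true ->
  lfilled n sigma st j = true \/ j = sigma (laidx a).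
Proof.
  unfold lfilled. intros H. apply existsb_exists in H. destruct H as [i [Hin H]].
  apply Bool.andb_true_iff in H. destruct H as [H1 H2]. apply Nat.eqb_eq in H2.
  destruct (Nat.eq_dec i (laidx a)).
  - right. subst. auto.
  - left. apply existsb_exists. exists i. split; auto. apply Bool.andb_true_iff. split; [|apply Nat.eqb_eq; auto].
    unfold lat in *. destruct a; simpl in *; unfold lupd in H1; destruct (Nat.eq_dec i i0); auto; simpl in n0; congruence.
Qed.

Lemma lat_filled n sigma st : is_perm n sigma ->
  cnt (lat st) n <= cnt (lfilled n sigma st) n.
Proof.
  intros [Hp1 Hp2]. apply (cnt_inj _ _ sigma).
  - intros i Hi Ha. split; auto. apply existsb_exists. exists i. split.
    + apply in_seq. lia.
    + rewrite Ha. simpl. apply Nat.eqb_refl.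
  - intros. apply Hp2; auto.
Qed.

Lemma l_ivt n r s gs sigma m : is_perm n sigma -> m <= n ->
  forall plan st, lplan_ok n r s gs st plan -> LInv n r s gs st ->
  cnt (lfilled n sigma st) n <= m ->
  exists st', In st' (lstates st plan) /\ LInv n r s gs st' /\ cnt (lfilled n sigma st') n = m.
Proof.
  intros Hp Hm. induction plan as [|a p IH]; intros st Hok HI Hc.
  - exists st. simpl. split; auto. split; auto. simpl in Hok.
    pose proof (lat_filled n sigma st Hp).
    rewrite (cnt_all (lat st)) in H. lia. intros i Hi. unfold lat. rewrite Hok; auto.
  - destruct (Nat.eq_dec (cnt (lfilled n sigma st) n) m).
    + exists st. simpl. auto.
    + destruct Hok as [Ha Hp'].
      assert (cnt (lfilled n sigma (lapply st a)) n <= cnt (lfilled n sigma st) n + 1).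
      { apply (cnt_step _ _ (sigma (laidx a))). intros j _ Hj. apply lfilled_step; auto. }
      destruct (IH (lapply st a) Hp' (LInv_step _ _ _ _ _ _ HI Ha) ltac:(lia)) as [st' [H1 H2]].
      exists st'. split; auto. simpl. auto.
Qed.

Lemma lbuf_count_cnt n st : lbuf_count n st = cnt (lbf st) n.
Proof. unfold lbuf_count. rewrite <- cnt_filter. reflexivity. Qed.

Lemma labeled_bound q sigma plan : 1 <= q -> is_perm (nn q) sigma ->
  lplan_ok (nn q) (/2) (sp q) (fun i => gp q (sigma i)) linit plan ->
  q <= lmax_buffers (nn q) plan.
Proof.
  intros Hq Hp Hok.
  assert (Hm : q * S (2*q) <= nn q) by (unfold nn; nia).
  assert (HI0 : LInv (nn q) (/2)%R (sp q) (fun i => gp q (sigma i)) linit) by (intros i _ H; discriminate).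
  assert (Hc0 : cnt (lfilled (nn q) sigma linit) (nn q) <= q * S (2*q)).
  { rewrite cnt_none; [lia|]. intros j _. unfold lfilled. apply Bool.not_true_iff_false. intro H.
    apply existsb_exists in H. destruct H as [i [_ H]]. unfold lat, linit in H. discriminate. }
  destruct (l_ivt _ _ _ _ _ _ Hp Hm plan linit Hok HI0 Hc0) as [st [Hin [HI Hc]]].
  eapply Nat.le_trans; [|apply (fold_max_ge (lbuf_count (nn q)) _ _ Hin)].
  rewrite lbuf_count_cnt.
  apply (core q (lvac st) (lbf st) (lat st) (lfilled (nn q) sigma st) Hq).
  - intros i _. unfold lvac, lbf, lat. destruct (st i); auto.
  - apply lat_filled; auto.
  - exact Hc.
  - intros b a t c Hb Ha Ht Htb Hca Hf.
    unfold lfilled in Hf. apply existsb_exists in Hf. destruct Hf as [i [Hin' Hf]].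
    apply in_seq in Hin'. apply Bool.andb_true_iff in Hf. destruct Hf as [H1 H2]. apply Nat.eqb_eq in H2.
    unfold lat in H1. destruct (st i) eqn:Ei; try discriminate.
    assert (Hx : t * S (2*q) + c < nn q) by (unfold nn; nia).
    pose proof (HI i ltac:(lia) Ei _ Hx) as HH. cbv beta in HH. rewrite H2 in HH.
    unfold lvac. destruct (st (t * S (2*q) + c)) eqn:E; auto.
    exfalso. apply (HH (geo_overlap q b a t c Hq Ha ltac:(lia) Htb Hca)). auto.
Qed.

Definition uat (st : ustate) i := match st i with UAtGoal _ => true | _ => false end.
Definition uvac (st : ustate) i := match st i with UAtStart => false | _ => true end.
Definition ubf (st : ustate) i := match st i with UInBuf => true | _ => false end.
Definition ugoalof (st : ustate) i := match st i with UAtGoal j => j | _ => 0 end.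
Definition ufilled n (st : ustate) j :=
  existsb (fun i => match st i with UAtGoal j' => Nat.eqb j' j | _ => false end) (seq 0 n).
Definition UInv n r s g (st : ustate) :=
  (forall i j, i < n -> st i = UAtGoal j -> j < n /\
     forall x, x < n -> overlap r (g j) (s x) -> st x <> UAtStart) /\
  (forall i i' j, i < n -> i' < n -> st i = UAtGoal j -> st i' = UAtGoal j -> i = i').
Definition uaidx a := match a with UDirect i j | UFromBuf i j => (i, j) | UToBuf i => (i, 0) end.

Lemma UInv_place n r s g st i j : UInv n r s g st -> i < n -> st i <> UAtGoal j ->
  ufree n r s g st i j -> UInv n r s g (uupd st i (UAtGoal j)).
Proof.
  intros [H1 H2] Hi Hni [Hj [Hocc Hf]]. unfold uupd. split.
  - intros i' j' Hi' Hg. destruct (Nat.eq_dec i' i).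
    + injection Hg as <-. split; auto. intros x Hx Hov. destruct (Nat.eq_dec x i); try discriminate.
      specialize (Hf x Hx n0). unfold upos in Hf. intro Hs. rewrite Hs in Hf. apply Hf; auto.
    + destruct (H1 i' j' Hi' Hg) as [Hj' Hx']. split; auto. intros x Hx Hov.
      destruct (Nat.eq_dec x i); try discriminate. apply Hx'; auto.
  - intros a b j' Ha Hb Ea Eb. destruct (Nat.eq_dec a i), (Nat.eq_dec b i); try congruence.
    + injection Ea as <-. exfalso. apply (Hocc b Hb Eb).
    + injection Eb as <-. exfalso. apply (Hocc a Ha Ea).
    + apply (H2 a b j'); auto.
Qed.

Lemma UInv_step n r s g st a : UInv n r s g st -> ustep_ok n r s g st a -> UInv n r s g (uapply st a).
Proof.
  intros HI Hok. destruct a as [i j|i|i j]; simpl in *.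
  - destruct Hok as [Hi [Hs Hf]]. apply UInv_place; auto. congruence.
  - destruct HI as [H1 H2]. destruct Hok as [Hi Hs]. unfold uupd. split.
    + intros i' j' Hi' Hg. destruct (Nat.eq_dec i' i); try discriminate.
      destruct (H1 i' j' Hi' Hg) as [Hj' Hx']. split; auto. intros x Hx Hov.
      destruct (Nat.eq_dec x i); try discriminate. apply Hx'; auto.
    + intros a b j' Ha Hb Ea Eb. destruct (Nat.eq_dec a i), (Nat.eq_dec b i); try congruence.
      apply (H2 a b j'); auto.
  - destruct Hok as [Hi [Hs Hf]]. apply UInv_place; auto. congruence.
Qed.

Lemma ufilled_step n st a j : ufilled n (uapply st a) j = true ->
  ufilled n st j = true \/ j = snd (uaidx a).
Proof.
  unfold ufilled. intros H. apply existsb_exists in H. destruct H as [i [Hin H]].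
  destruct (Nat.eq_dec i (fst (uaidx a))) as [E|E].
  - destruct a as [i0 j0|i0|i0 j0]; simpl in *; unfold uupd in H; subst i0;
      destruct (Nat.eq_dec i i); try congruence; try discriminate; right; apply Nat.eqb_eq in H; auto.
  - left. apply existsb_exists. exists i. split; auto.
    destruct a; simpl in *; unfold uupd in H; destruct (Nat.eq_dec i i0); congruence.
Qed.

Lemma uat_filled n r s g st : UInv n r s g st -> cnt (uat st) n <= cnt (ufilled n st) n.
Proof.
  intros [H1 H2]. apply (cnt_inj _ _ (ugoalof st)).
  - intros i Hi Ha. unfold uat, ugoalof in *. destruct (st i) eqn:E; try discriminate.
    split; [apply (H1 i j Hi E)|]. apply existsb_exists. exists i. split.
    + apply in_seq. lia.
    + rewrite E. apply Nat.eqb_refl.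
  - intros i i' Hi Hi' Ha Ha'. unfold uat, ugoalof in *.
    destruct (st i) eqn:E; try discriminate. destruct (st i') eqn:E'; try discriminate.
    intros ->. apply (H2 i i' j0); auto.
Qed.

Lemma u_ivt n r s g m : m <= n ->
  forall plan st, uplan_ok n r s g st plan -> UInv n r s g st ->
  cnt (ufilled n st) n <= m ->
  exists st', In st' (ustates st plan) /\ UInv n r s g st' /\ cnt (ufilled n st') n = m.
Proof.
  intros Hm. induction plan as [|a p IH]; intros st Hok HI Hc.
  - exists st. simpl. split; auto. split; auto. simpl in Hok.
    assert (HH : cnt (ufilled n st) n = n); [|lia].
    apply cnt_all. intros j Hj. destruct (Hok j Hj) as [i [Hi E]]. apply existsb_exists. exists i. split.
    + apply in_seq. lia.
    + rewrite E. apply Nat.eqb_refl.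
  - destruct (Nat.eq_dec (cnt (ufilled n st) n) m).
    + exists st. simpl. auto.
    + destruct Hok as [Ha Hp'].
      assert (cnt (ufilled n (uapply st a)) n <= cnt (ufilled n st) n + 1).
      { apply (cnt_step _ _ (snd (uaidx a))). intros j _ Hj. apply ufilled_step; auto. }
      destruct (IH (uapply st a) Hp' (UInv_step _ _ _ _ _ _ HI Ha) ltac:(lia)) as [st' [H1 H2]].
      exists st'. split; auto. simpl. auto.
Qed.

Lemma ubuf_count_cnt n st : ubuf_count n st = cnt (ubf st) n.
Proof. unfold ubuf_count. rewrite <- cnt_filter. reflexivity. Qed.

Lemma unlabeled_bound q plan : 1 <= q ->
  uplan_ok (nn q) (/2) (sp q) (gp q) uinit plan ->
  q <= umax_buffers (nn q) plan.
Proof.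
  intros Hq Hok.
  assert (Hm : q * S (2*q) <= nn q) by (unfold nn; nia).
  assert (HI0 : UInv (nn q) (/2)%R (sp q) (gp q) uinit) by (split; intros; discriminate).
  assert (Hc0 : cnt (ufilled (nn q) uinit) (nn q) <= q * S (2*q)).
  { rewrite cnt_none; [lia|]. intros j _. unfold ufilled. apply Bool.not_true_iff_false. intro H.
    apply existsb_exists in H. destruct H as [i [_ H]]. unfold uinit in H. discriminate. }
  destruct (u_ivt _ _ _ _ _ Hm plan uinit Hok HI0 Hc0) as [st [Hin [HI Hc]]].
  eapply Nat.le_trans; [|apply (fold_max_ge (ubuf_count (nn q)) _ _ Hin)].
  rewrite ubuf_count_cnt.
  apply (core q (uvac st) (ubf st) (uat st) (ufilled (nn q) st) Hq).
  - intros i _. unfold uvac, ubf, uat. destruct (st i); auto.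
  - eapply uat_filled; eauto.
  - exact Hc.
  - intros b a t c Hb Ha Ht Htb Hca Hf.
    unfold ufilled in Hf. apply existsb_exists in Hf. destruct Hf as [i [Hin' Hf]].
    apply in_seq in Hin'. destruct (st i) eqn:Ei; try discriminate. apply Nat.eqb_eq in Hf.
    assert (Hx : t * S (2*q) + c < nn q) by (unfold nn; nia).
    destruct HI as [H1 _]. destruct (H1 i j ltac:(lia) Ei) as [_ HH]. subst j.
    unfold uvac. destruct (st (t * S (2*q) + c)) eqn:E; auto.
    exfalso. apply (HH _ Hx (geo_overlap q b a t c Hq Ha ltac:(lia) Htb Hca)). auto.
Qed.

Local Open Scope R_scope.
Theorem theorem3 :
  exists c : R, 0 < c /\
  forall N : nat, exists n : nat, (N <= n)%nat /\
    exists (r L : R) (s g : nat -> point),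
      valid_instance n r L s g /\
      (forall plan : list uaction,
          uplan_ok n r s g uinit plan ->
          c * sqrt (INR n) <= INR (umax_buffers n plan)) /\
      (forall sigma : nat -> nat, is_perm n sigma ->
        forall plan : list laction,
          lplan_ok n r s (fun i => g (sigma i)) linit plan ->
          c * sqrt (INR n) <= INR (lmax_buffers n plan)).
Proof.
  exists (/3). split; [lra|]. intros N.
  set (q := S N). assert (Hq : (1 <= q)%nat) by (unfold q; lia).
  exists (nn q). split; [unfold nn, q; nia|].
  exists (/2), (INR (ww q)), (sp q), (gp q).
  assert (Hs : / 3 * sqrt (INR (nn q)) <= INR q).
  { assert (INR (nn q) <= (3 * INR q) ^ 2).
    { assert (nn q <= 9 * q * q)%nat by (unfold nn; nia). apply le_INR in H.
      rewrite !mult_INR in H. simpl in H |- *. replace (INR 9) with 9 in H by (simpl; lra). nra. }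
    pose proof (pos_INR q).
    assert (sqrt (INR (nn q)) <= 3 * INR q).
    { rewrite <- (sqrt_pow2 (3 * INR q)) by lra. apply sqrt_le_1_alt. auto. }
    lra. }
  split; [apply valid; auto|]. split.
  - intros plan Hok. apply (unlabeled_bound q plan Hq) in Hok. apply le_INR in Hok. lra.
  - intros sigma Hp plan Hok. apply (labeled_bound q sigma plan Hq Hp) in Hok. apply le_INR in Hok. lra.
Qed.
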